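(* Let $(P,A,\lambda)$ be a marked poset and $(U_1,U_2)$ an admissible decomposition of it. Then for every $N\in\mathbb{N}$, $S_{U_1,U_2}(N\lambda)$ equals the $N$-fold Minkowski sum $S_{U_1,U_2}(\lambda)+\cdots+S_{U_1,U_2}(\lambda)$.
   Context: A marked poset is a triple $(P,A,\lambda)$ where $(P,\prec)$ is a finite poset, $A\subseteq P$ contains all minimal and all maximal elements of $P$, and $\lambda:A\to\mathbb{Z}_{\ge 0}$, $a\mapsto\lambda_a$. A decomposition of $(P,A,\lambda)$ is a pair $(U_1,U_2)$ of disjoint sets with $U_1\cup U_2=P\setminus A$; it is admissible if there are no $u_1\in U_1$, $u_2\in U_2$ with $u_1\prec u_2$. Put $A_1=A\cup U_1$. The marked chain-order polytope $\mathcal{CO}_{U_1,U_2}(\lambda)\subset\mathbb{R}^{P\setminus A}$ is the set of $(x_p)_{p\in P\setminus A}$ such that: (i) $x_p\le\lambda_a$ whenever $p\in U_1$, $a\in A$, $p\prec a$; (ii) $\lambda_b\le x_q$ whenever $q\in U_1$, $b\in A$, $b\prec q$; (iii) $x_p\le x_q$ whenever $p,q\in U_1$, $p\prec q$; (iv) $x_p\ge0$ for $p\in U_2$; (v) for every chain $b\prec p_n\prec\cdots\prec p_1\prec a$ with $n\ge1$, $a,b\in A_1$, $p_i\in U_2$: $x_{p_1}+\cdots+x_{p_n}\le\lambda_a-\lambda_b$, where $\lambda_q$ means $x_q$ for $q\in U_1$; (vi) for every chain $p_1\prec\cdots\prec p_s\prec q$ with $q\in U_1$, $p_i\in U_2$: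 $x_{p_1}+\cdots+x_{p_s}\le x_q$. Set $S_{U_1,U_2}(\lambda)=\mathcal{CO}_{U_1,U_2}(\lambda)\cap\mathbb{Z}_{\ge0}^{P\setminus A}$; $N\lambda$ is the marking $a\mapsto N\lambda_a$. *)

(* Defs.v *)
From HB Require Import structures.
From mathcomp Require Import all_boot all_order all_algebra.
Set Implicit Arguments. Unset Strict Implicit. Unset Printing Implicit Defensive.
Import Order.TTheory GRing.Theory Num.Theory.
Local Open Scope ring_scope.

(* Points of R^{P\A}
   are represented by functions x : P -> R whose values on A are ignored
   by CO and required to be 0 in S (so that Minkowski sums make sense). *)

Section MarkedPoset.
Context {d : Order.disp_t} {P : finPOrderType d}.

(* (P, A, lam) is a marked poset: A contains all minimal and maximal elements.
   Only the values of lam on A are relevant. *)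
Definition marked_poset (A : {set P}) : Prop :=
  (forall p : P, (forall q : P, ~~ (q < p)%O) -> p \in A) /\
  (forall p : P, (forall q : P, ~~ (p < q)%O) -> p \in A).

Definition decomposition (A U1 U2 : {set P}) : Prop :=
  [disjoint U1 & U2] /\ U1 :|: U2 = ~: A.

Definition admissible (A U1 U2 : {set P}) : Prop :=
  decomposition A U1 U2 /\
  ~ (exists u1 u2, [/\ u1 \in U1, u2 \in U2 & (u1 < u2)%O]).

Definition scale_marking (N : nat) (lam : P -> nat) : P -> nat :=
  fun a => (N * lam a)%N.

Variable R : numDomainType.

Definition lamx (A : {set P}) (lam : P -> nat) (x : P -> R) (q : P) : R :=
  if q \in A then (lam q)%:R else x q.

Definition in_CO (A U1 U2 : {set P}) (lam : P -> nat) (x : P -> R) : Prop :=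
  (forall p a, p \in U1 -> a \in A -> (p < a)%O -> x p <= (lam a)%:R) /\
  (forall q b, q \in U1 -> b \in A -> (b < q)%O -> (lam b)%:R <= x q) /\
  (forall p q, p \in U1 -> q \in U1 -> (p < q)%O -> x p <= x q) /\
  (forall p, p \in U2 -> 0 <= x p) /\
  (* (v): chains b < p_n < ... < p_1 < a, n >= 1, s = [:: p_n; ...; p_1] *)
  (forall (a b : P) (s : seq P),
      a \in A :|: U1 -> b \in A :|: U1 -> s != [::] ->
      all (fun p => p \in U2) s ->
      path (fun u v => (u < v)%O) b (rcons s a) ->
      \sum_(p <- s) x p <= lamx A lam x a - lamx A lam x b) /\
  (forall (q : P) (s : seq P),
      q \in U1 -> s != [::] ->
      all (fun p => p \in U2) s ->
      sorted (fun u v => (u < v)%O) (rcons s q) ->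
      \sum_(p <- s) x p <= x q).

End MarkedPoset.

Definition S_lat {d : Order.disp_t} {P : finPOrderType d}
    (A U1 U2 : {set P}) (lam : P -> nat) (x : {ffun P -> int}) : Prop :=
  (forall a, a \in A -> x a = 0) /\
  (forall p, p \notin A -> 0 <= x p) /\
  in_CO A U1 U2 lam (fun p => x p).

Fixpoint minkowski_pow {V : zmodType} (S : V -> Prop) (N : nat) : V -> Prop :=
  match N with
  | 0 => fun x => x = 0
  | N'.+1 => fun x => exists y z, [/\ minkowski_pow S N' y, S z & x = y + z]
  end.

(* Main.v *)
Require Import Defs.
From HB Require Import structures.
From mathcomp Require Import all_boot all_order all_algebra zify.
Set Implicit Arguments. Unset Strict Implicit. Unset Printing Implicit Defensive.
Import Order.TTheory GRing.Theory Num.Theory.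

Section Poset.
Context {d : Order.disp_t} {P : finPOrderType d}.

Lemma exists_max (p : P) : exists a : P, (p <= a)%O /\ forall q, ~~ (a < q)%O.
Proof.
case: (@arg_maxnP P p (fun a => (p <= a)%O) (fun a => #|[set q : P | (q < a)%O]|) (lexx p)).
move=> a pa Ha; exists a; split => // q; apply/negP => aq.
have := Ha q (le_trans pa (ltW aq)).
apply/negP; rewrite -ltnNge; apply: proper_card; apply/properP; split.
  by apply/subsetP => r; rewrite !inE => ra; apply: lt_trans ra aq.
by exists a; rewrite !inE ?ltxx.
Qed.

Lemma exists_min (p : P) : exists a : P, (a <= p)%O /\ forall q, ~~ (q < a)%O.
Proof.
case: (@arg_maxnP P p (fun a => (a <= p)%O) (fun a => #|[set q : P | (a < q)%O]|) (lexx p)).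
move=> a pa Ha; exists a; split => // q; apply/negP => aq.
have := Ha q (le_trans (ltW aq) pa).
apply/negP; rewrite -ltnNge; apply: proper_card; apply/properP; split.
  by apply/subsetP => r; rewrite !inE => ra; apply: lt_trans aq ra.
by exists a; rewrite !inE ?ltxx.
Qed.

Lemma sumPosz (T : Type) (s : seq T) (F : T -> nat) :
  (\sum_(p <- s) (Posz (F p)))%R = (Posz (\sum_(p <- s) F p)).
Proof.
elim: s => [|p s IH]; first by rewrite !big_nil.
by rewrite !big_cons IH PoszD.
Qed.

Lemma homo_step (f : nat -> nat) : (forall t, f t <= f t.+1) ->
  forall m n, m <= n -> f m <= f n.
Proof.
move=> h m n mn; rewrite -(subnKC mn); elim: (n - m) => [|k IH].
  by rewrite addn0.
by apply: leq_trans IH _; rewrite addnS.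
Qed.

Section Main.
Variables (A U1 U2 : {set P}) (lam : P -> nat).
Hypothesis hm : marked_poset A.
Hypothesis had : admissible A U1 U2.

Lemma U1nA p : p \in U1 -> p \notin A.
Proof.
case: had => [[_ hU] _] hp; have : p \in U1 :|: U2 by rewrite inE hp.
by rewrite hU inE.
Qed.

Lemma U2nA p : p \in U2 -> p \notin A.
Proof.
case: had => [[_ hU] _] hp; have : p \in U1 :|: U2 by rewrite inE hp orbT.
by rewrite hU inE.
Qed.

Lemma nA_cases p : p \notin A -> p \in U1 \/ p \in U2.
Proof.
case: had => [[_ hU] _] hp; have : p \in ~: A by rewrite inE.
by rewrite -hU inE => /orP.
Qed.

Lemma U2nU1 p : p \in U2 -> p \notin U1.
Proof.
case: had => [[hdis _] _] hp; apply/negP => h1.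
by have := disjointFr hdis h1; rewrite hp.
Qed.

Lemma noU1U2 u v : u \in U1 -> v \in U2 -> ~~ (u < v)%O.
Proof. by case: had => _ hn hu hv; apply/negP => uv; apply: hn; exists u, v. Qed.

Lemma below p : p \notin A -> exists2 b, b \in A & (b < p)%O.
Proof.
move=> hp; case: (exists_min p) => b [bp hb].
have bA : b \in A := hm.1 b hb.
exists b => //; rewrite lt_neqAle bp andbT; apply/eqP => e.
by rewrite -e bA in hp.
Qed.

Lemma above p : p \notin A -> exists2 a, a \in A & (p < a)%O.
Proof.
move=> hp; case: (exists_max p) => b [bp hb].
have bA : b \in A := hm.2 b hb.
exists b => //; rewrite lt_neqAle bp andbT; apply/eqP => e.
by rewrite e bA in hp.
Qed.

Section X.
Variables (N : nat) (x : {ffun P -> int}).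
Hypothesis hx : S_lat A U1 U2 (scale_marking N lam) x.

Definition xn p := absz (x p).
Lemma xE p : p \notin A -> x p = (Posz (xn p)).
Proof. by move=> hp; rewrite /xn gez0_abs //; exact: hx.2.1. Qed.

Definition ub a := if a \in A then N * lam a else xn a.

Lemma lamxE a : a \in A :|: U1 ->
  lamx A (scale_marking N lam) (fun p => x p) a = (Posz (ub a)).
Proof.
rewrite /lamx /ub inE; case: ifP => hA /=; first by rewrite natz.
by move=> hU; rewrite xE ?hA.
Qed.

Lemma sumE s : all (fun p => p \in U2) s ->
  (\sum_(p <- s) x p)%R = (Posz (\sum_(p <- s) xn p)).
Proof.
elim: s => [|p s IH] /=; first by rewrite !big_nil.
by move/andP=> [hp hs]; rewrite !big_cons IH // xE ?U2nA // PoszD.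
Qed.

Lemma xv a b s : a \in A :|: U1 -> b \in A -> s != [::] ->
  all (fun p => p \in U2) s -> path (fun u v => (u < v)%O) b (rcons s a) ->
  \sum_(p <- s) xn p + N * lam b <= ub a.
Proof.
move=> ha hb hs hall hpath.
have hb' : b \in A :|: U1 by rewrite inE hb.
have := hx.2.2.2.2.2.2.1 a b s ha hb' hs hall hpath.
rewrite sumE // !lamxE //.
have -> : ub b = N * lam b by rewrite /ub hb.
move: (N * lam b) (ub a) (\sum_(p <- s) xn p) => k u t; lia.
Qed.

Lemma Kub p s a : p \in U2 -> a \in A :|: U1 -> all (fun q => q \in U2) s ->
  path (fun u v => (u < v)%O) p (rcons s a) ->
  xn p + \sum_(q <- s) xn q <= ub a.
Proof.
move=> hp ha hs hpath.
case: (below (U2nA hp)) => b bA bp.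
have := xv ha bA (isT : p :: s != [::]) (_ : all _ (p :: s)).
rewrite big_cons /= bp hpath => /(_ (introT andP (conj hp hs)) isT).
lia.
Qed.

Definition val (G' : P -> nat) q :=
  if q \in A then N * lam q else if q \in U2 then G' q + xn q else 0.

Fixpoint G n p : nat :=
  if n is n'.+1 then \max_(q | (q < p)%O) val (G n') q else 0.

Lemma GS n p : G n.+1 p = \max_(q | (q < p)%O) val (G n) q.
Proof. by []. Qed.
Lemma G0 p : G 0 p = 0.
Proof. by []. Qed.
Arguments G : simpl never.

Lemma max_ge (p q : P) (F : P -> nat) : (q < p)%O -> F q <= \max_(r | (r < p)%O) F r.
Proof. by move=> h; rewrite (bigD1 q) //=; exact: leq_maxl. Qed.

Lemma Gmono n p : G n p <= G n.+1 p.
Proof.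
elim: n p => [|n IH] p; first by rewrite G0.
rewrite !GS; apply/bigmax_leqP => q hq; apply: leq_trans _ (max_ge _ hq).
rewrite /val; case: ifP => // _; case: ifP => // _; rewrite leq_add2r; exact: IH.
Qed.

Lemma Gub n p s a : p \in U2 -> a \in A :|: U1 -> all (fun q => q \in U2) s ->
  path (fun u v => (u < v)%O) p (rcons s a) ->
  G n p + (xn p + \sum_(q <- s) xn q) <= ub a.
Proof.
elim: n p s => [|n IH] p s hp ha hs hpath; first by rewrite G0; exact: Kub.
have hK := Kub hp ha hs hpath.
rewrite GS addnC -leq_subRL //; apply/bigmax_leqP => q hq; rewrite leq_subRL //.
rewrite /val; case: ifP => qA.
  have := xv ha qA (isT : p :: s != [::]) (_ : all _ (p :: s)).
  rewrite big_cons /= hq hpath => /(_ (introT andP (conj hp hs)) isT).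
  lia.
case: ifP => qU2; last by rewrite addn0.
have := IH q (p :: s) qU2 ha (_ : all _ (p :: s)).
rewrite big_cons /= hq hpath => /(_ (introT andP (conj hp hs)) isT).
lia.
Qed.

Definition M := \max_i (N * lam i).

Lemma Gbound n p : G n p <= M.
Proof.
elim: n p => [|n IH] p; first by rewrite G0.
rewrite GS; apply/bigmax_leqP => q _; rewrite /val; case: ifP => qA; first exact: leq_bigmax.
case: ifP => qU2 //.
case: (above (U2nA qU2)) => a aA qa.
have ha : a \in A :|: U1 by rewrite inE aA.
have := @Gub n q [::] a qU2 ha isT.
rewrite /= qa big_nil addn0 /ub aA => /(_ isT) h.
exact: leq_trans h (leq_bigmax (F := fun i => N * lam i) a).
Qed.

Definition SG n := \sum_p G n p.

Lemma S_grow n : ~~ [forall p, G n.+1 p == G n p] -> SG n < SG n.+1.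
Proof.
case/forallPn => p hp; rewrite /SG (bigD1 p) //= [X in _ < X](bigD1 p) //=.
have h1 : G n p < G n.+1 p by rewrite ltn_neqAle eq_sym hp Gmono.
have h2 : \sum_(i | i != p) G n i <= \sum_(i | i != p) G n.+1 i.
  by apply: leq_sum => i _; apply: Gmono.
exact: leq_add h1 h2.
Qed.

Lemma exists_stable : exists n, forall p, G n.+1 p = G n p.
Proof.
have hle n : (forall m, m < n -> ~~ [forall p, G m.+1 p == G m p]) -> n <= SG n.
  elim: n => [|n IH] h //.
  have := IH (fun m hm => h m (ltnW hm)).
  have := S_grow (h n (ltnSn n)); lia.
have bound n : SG n <= #|P| * M.
  have h : SG n <= \sum_(p : P) M by apply: leq_sum => p _; apply: Gbound.
  by move: h; rewrite sum_nat_const.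
set K := #|P| * M in bound.
case: (boolP [exists m : 'I_K.+1, [forall p, G m.+1 p == G m p]]).
  by case/existsP => m /forallP h; exists m => p; apply/eqP/h.
rewrite negb_exists => /forallP h.
have := hle K.+1 (fun m hm => h (Ordinal hm)).
have := bound K.+1; lia.
Qed.

Definition Hg (g : P -> nat) :=
  [/\ (forall p q, q \in A -> (q < p)%O -> N * lam q <= g p),
      (forall p q, q \in U2 -> (q < p)%O -> g q + xn q <= g p) &
      (forall p a, p \in U2 -> a \in A :|: U1 -> (p < a)%O -> g p + xn p <= ub a)].

Lemma exists_g : exists g, Hg g.
Proof.
case: exists_stable => n hn; exists (G n); split.
- move=> p q qA qp; rewrite -hn GS; apply: leq_trans _ (max_ge _ qp).
  by rewrite /val qA.
- move=> p q qU qp; rewrite -[G n p]hn GS; apply: leq_trans _ (max_ge _ qp).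
  by rewrite /val (negbTE (U2nA qU)) qU.
- move=> p a hp ha pa; have := @Gub n p [::] a hp ha isT.
  by rewrite /= pa big_nil addn0 => /(_ isT).
Qed.


Section F.
Variables (f : nat -> nat) (g : P -> nat) (mu : P -> nat).

Definition Tzn p := if p \in A then 0 else if p \in U1 then f (xn p)
  else if p \in U2 then f (g p + xn p) - f (g p) else 0.
Definition Tz : {ffun P -> int} := [ffun p => Posz (Tzn p)].

Lemma TznU1 p : p \in U1 -> Tzn p = f (xn p).
Proof. by move=> hp; rewrite /Tzn (negbTE (U1nA hp)) hp. Qed.
Lemma TznU2 p : p \in U2 -> Tzn p = f (g p + xn p) - f (g p).
Proof. by move=> hp; rewrite /Tzn (negbTE (U2nA hp)) (negbTE (U2nU1 hp)) hp. Qed.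

Hypothesis fmono : forall m n, m <= n -> f m <= f n.
Hypothesis fmu : forall a, f (N * lam a) = mu a.
Hypothesis hg : Hg g.

Lemma tele p s : p \in U2 -> all (fun q => q \in U2) s ->
  path (fun u v => (u < v)%O) p s ->
  Tzn p + \sum_(q <- s) Tzn q + f (g p) <= f (g (last p s) + xn (last p s)).
Proof.
case: hg => _ h2 _.
elim: s p => [|q s IH] p hp /=.
  move=> _ _; rewrite big_nil addn0 TznU2 // subnK //; apply: fmono; exact: leq_addr.
move=> /andP[hq hs] /andP[pq hpath]; rewrite big_cons.
have := IH q hq hs hpath.
have := fmono (h2 q p hp pq).
have : f (g p) <= f (g p + xn p) by apply: fmono; exact: leq_addr.
rewrite (TznU2 hp).
move: (f (g p)) (f (g p + xn p)) (f (g q)) (Tzn q) (\sum_(i <- s) Tzn i)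
  (f (g (last q s) + xn (last q s))) => a b c e h k.
lia.
Qed.

Lemma sumTz s : (\sum_(p <- s) Tz p)%R = Posz (\sum_(p <- s) Tzn p).
Proof. by rewrite -sumPosz; apply: eq_bigr => p _; rewrite ffunE. Qed.

Lemma lamxTz a : lamx A mu (fun p => Tz p) a =
  Posz (if a \in A then mu a else Tzn a).
Proof. by rewrite /lamx ffunE; case: ifP => _ //; rewrite natz. Qed.

Lemma Tz_S : S_lat A U1 U2 mu Tz.
Proof.
case: hx => hA [hnn [hi [hii [hiii [hiv [hv hvi]]]]]].
case: hg => h2a h2b h3.
have key a l : a \in A :|: U1 -> l \in U2 -> (l < a)%O ->
    f (g l + xn l) <= (if a \in A then mu a else Tzn a).
  move=> ha hl la; have := h3 l a hl ha la; rewrite /ub; case: ifP => aA h.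
    by rewrite -fmu; exact: fmono.
  have aU1 : a \in U1 by move: ha; rewrite inE aA.
  by rewrite TznU1 //; exact: fmono.
split; [|split].
- by move=> a aA; rewrite ffunE /Tzn aA.
- by move=> p _; rewrite ffunE.
split; [|split; [|split; [|split; [|split]]]].
- move=> p a hp aA pa; rewrite ffunE TznU1 // natz -fmu lez_nat; apply: fmono.
  by have := hi p a hp aA pa; rewrite xE ?U1nA // natz lez_nat.
- move=> q b hq bA bq; rewrite ffunE TznU1 // natz -fmu lez_nat; apply: fmono.
  by have := hii q b hq bA bq; rewrite xE ?U1nA // natz lez_nat.
- move=> p q hp hq pq; rewrite !ffunE !TznU1 // lez_nat; apply: fmono.
  by have := hiii p q hp hq pq; rewrite !xE ?U1nA // lez_nat.
- by move=> p _; rewrite ffunE.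
- move=> a b s ha hb hs hall hpath.
  rewrite sumTz !lamxTz.
  case: s hs hall hpath => [//|p0 s] _ /= /andP[hp0 hall] /andP[bp0 hpath].
  have bA : b \in A.
    move: hb; rewrite inE => /orP[//|bU1].
    by have := noU1U2 bU1 hp0; rewrite bp0.
  rewrite bA big_cons.
  move: hpath; rewrite rcons_path => /andP[hpath la].
  have hl : last p0 s \in U2.
    by apply: (allP (_ : all (fun q => q \in U2) (p0 :: s))); [rewrite /= hp0 hall | exact: mem_last].
  have := tele hp0 hall hpath.
  have := key a _ ha hl la.
  have := fmono (h2a p0 b bA bp0); rewrite fmu.
  move: (f (g p0)) (mu b) (Tzn p0) (\sum_(i <- s) Tzn i)
    (f (g (last p0 s) + xn (last p0 s))) (if a \in A then mu a else Tzn a) => c m t k e u.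
  lia.
- move=> q s hq hs hall hsort.
  rewrite sumTz ffunE.
  case: s hs hall hsort => [//|p0 s] _ /= /andP[hp0 hall].
  rewrite rcons_path big_cons => /andP[hpath la].
  have hl : last p0 s \in U2.
    by apply: (allP (_ : all (fun q => q \in U2) (p0 :: s))); [rewrite /= hp0 hall | exact: mem_last].
  have ha : q \in A :|: U1 by rewrite inE hq orbT.
  have := tele hp0 hall hpath.
  have := key q _ ha hl la; rewrite (negbTE (U1nA hq)).
  move: (f (g p0)) (Tzn q) (Tzn p0) (\sum_(i <- s) Tzn i)
    (f (g (last p0 s) + xn (last p0 s))) => c m t k e.
  lia.
Qed.

End F.

Lemma Tz_add f1 f2 g : (forall m n, m <= n -> f1 m <= f1 n) ->
  (forall m n, m <= n -> f2 m <= f2 n) -> (forall t, f1 t + f2 t = t) ->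
  x = (Tz f1 g + Tz f2 g)%R.
Proof.
move=> m1 m2 hf; apply/ffunP => p; rewrite !ffunE.
case: (boolP (p \in A)) => pA; first by rewrite hx.1 // /Tzn pA.
rewrite xE // -PoszD; congr Posz.
case: (nA_cases pA) => hp; first by rewrite !TznU1.
rewrite !TznU2 //.
have := m1 _ _ (leq_addr (xn p) (g p)); have := m2 _ _ (leq_addr (xn p) (g p)).
have := hf (g p); have := hf (g p + xn p).
move: (f1 (g p)) (f2 (g p)) (f1 (g p + xn p)) (f2 (g p + xn p)) (g p) (xn p) => a b c e u v.
lia.
Qed.

End X.

Lemma zero_S x : S_lat A U1 U2 (scale_marking 0 lam) x -> x = 0%R.
Proof.
move=> hx; apply/ffunP => p; rewrite ffunE.
case: (boolP (p \in A)) => pA; first exact: hx.1.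
rewrite (xE hx pA); congr Posz.
case: (above pA) => a aA pa.
have ha : a \in A :|: U1 by rewrite inE aA.
case: (nA_cases pA) => hp.
  have := hx.2.2.1 p a hp aA pa; rewrite (xE hx pA) /scale_marking mul0n natz lez_nat.
  by rewrite leqn0 => /eqP.
have := @Kub 0 x hx p [::] a hp ha isT.
rewrite /= pa big_nil addn0 /ub aA mul0n leqn0 => /(_ isT) /eqP //.
Qed.

End Main.

Lemma S_add (A U1 U2 : {set P}) (lam1 lam2 mu : P -> nat) (y z : {ffun P -> int}) :
  S_lat A U1 U2 lam1 y -> S_lat A U1 U2 lam2 z -> (forall a, mu a = lam1 a + lam2 a) ->
  S_lat A U1 U2 mu (y + z)%R.
Proof.
case=> yA [ynn [yi [yii [yiii [yiv [yv yvi]]]]]].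
case=> zA [znn [zi [zii [ziii [ziv [zv zvi]]]]]] hmu.
have E p : (y + z)%R p = (y p + z p)%R by rewrite ffunE.
have L a : lamx A mu (fun p => (y + z)%R p) a =
    (lamx A lam1 (fun p => y p) a + lamx A lam2 (fun p => z p) a)%R.
  by rewrite /lamx; case: ifP => _; [rewrite hmu natrD | exact: E].
have S s : (\sum_(p <- s) (y + z)%R p = \sum_(p <- s) y p + \sum_(p <- s) z p)%R.
  by rewrite -big_split; apply: eq_bigr => p _; exact: E.
split; [|split].
- by move=> a aA; rewrite E yA ?zA // addr0.
- by move=> p hp; rewrite E; apply: addr_ge0; auto.
split; [|split; [|split; [|split; [|split]]]].
- by move=> p a hp aA pa; rewrite E hmu natrD; apply: lerD; auto.
- by move=> p a hp aA pa; rewrite E hmu natrD; apply: lerD; auto.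
- by move=> p q hp hq pq; rewrite !E; apply: lerD; auto.
- by move=> p hp; rewrite E; apply: addr_ge0; auto.
- move=> a b s ha hb hs hall hpath; rewrite S !L.
  have := yv a b s ha hb hs hall hpath; have := zv a b s ha hb hs hall hpath.
  by move=> hz hy; rewrite opprD addrACA; apply: lerD.
- move=> q s hq hs hall hsort; rewrite S E.
  by apply: lerD; auto.
Qed.

Lemma S_zero (A U1 U2 : {set P}) (lam : P -> nat) :
  S_lat A U1 U2 (scale_marking 0 lam) 0%R.
Proof.
have E p : (0%R : {ffun P -> int}) p = 0%R by rewrite ffunE.
have L a : lamx A (scale_marking 0 lam) (fun p => (0%R : {ffun P -> int}) p) a = 0%R.
  by rewrite /lamx E /scale_marking mul0n; case: ifP.
have S s : (\sum_(p <- s) (0%R : {ffun P -> int}) p = 0)%R.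
  by rewrite big1 // => p _; exact: E.
split; [|split].
- by move=> a _; rewrite E.
- by move=> p _; rewrite E.
split; [|split; [|split; [|split; [|split]]]].
- by move=> p a _ _ _; rewrite E.
- by move=> p a _ _ _; rewrite E /scale_marking mul0n.
- by move=> p q _ _ _; rewrite !E.
- by move=> p _; rewrite E.
- by move=> a b s _ _ _ _ _; rewrite S !L subr0.
- by move=> q s _ _ _ _; rewrite S E.
Qed.

End Poset.

Theorem theorem2p1 (d : Order.disp_t) (P : finPOrderType d)
    (A U1 U2 : {set P}) (lam : P -> nat) :
  marked_poset A -> admissible A U1 U2 ->
  forall (N : nat) (x : {ffun P -> int}),
    S_lat A U1 U2 (scale_marking N lam) x <->
    minkowski_pow (S_lat A U1 U2 lam) N x.
Proof.
move=> hm had N; elim: N => [|N IH] x; split.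
- by move/(zero_S hm had) ->.
- by move=> /= ->; exact: S_zero.
- move=> hx; case: (exists_g hm had hx) => g hg.
  pose f1 := fun t => t %/ N.+1.
  pose f2 := fun t => t - t %/ N.+1.
  have m1 : forall m n, m <= n -> f1 m <= f1 n by move=> m n mn; exact: leq_div2r.
  have m2 : forall m n, m <= n -> f2 m <= f2 n.
    apply: homo_step => t; rewrite /f2.
    have h1 : t.+1 %/ N.+1 <= (t + N.+1) %/ N.+1 by apply: leq_div2r; rewrite addnS ltnS leq_addr.
    move: h1; rewrite divnDr ?dvdnn // divnn /=.
    have h2 : t %/ N.+1 <= t := leq_div t N.+1.
    have h3 : t.+1 %/ N.+1 <= t.+1 := leq_div t.+1 N.+1.
    move: (t %/ N.+1) (t.+1 %/ N.+1) h2 h3 => a b; lia.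
  have hf : forall t, f1 t + f2 t = t by move=> t; rewrite /f1 /f2 subnKC // leq_div.
  exists (Tz A U1 U2 x f2 g), (Tz A U1 U2 x f1 g); split.
  + apply/IH; apply: (Tz_S had hx (f := f2) (mu := scale_marking N lam) m2 _ hg).
    by move=> a; rewrite /f2 /scale_marking mulKn // mulSn addKn.
  + apply: (Tz_S had hx (f := f1) (mu := lam) m1 _ hg).
    by move=> a; rewrite /f1 /scale_marking mulKn.
  + rewrite addrC; apply: (Tz_add had hx); [exact: m1 | exact: m2 | exact: hf].
- case=> y [z [hy hz ->]]; apply: (S_add ((IH y).2 hy) hz).
  by move=> a; rewrite /scale_marking mulSn addnC.
Qed.
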